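(* Let $\mu_1>\mu_2\ge\dots\ge\mu_K$ and $\sigma_1,\dots,\sigma_K>0$, and let $w^*=\arg\max_{w\in\mathcal{W}}\min_{a\neq1}\frac{(\mu_1-\mu_a)^2}{2(\sigma_1^2/w_1+\sigma_a^2/w_a)}$. For $a\ge2$ define $\psi_a(y)=\frac{(\mu_1-\mu_a)^2-2y\sigma_1^2}{2\sigma_a^2y}$. Then \[ w_1^*=\frac{1}{1+\sum_{i\ge2}1/\psi_i(y^* )},\qquad w_a^*=\frac{1/\psi_a(y^* )}{1+\sum_{i\ge2}1/\psi_i(y^* )}\quad(a\ge2), \] where $y^*$ is the unique solution of $\sum_{a\ge2}\frac{\sigma_1^2}{\sigma_a^2\psi_a(y)^2}=1$. Moreover, $F(y)=\sum_{a\ge2}\frac{\sigma_1^2}{\sigma_a^2\psi_a(y)^2}$, defined on $(0,(\mu_1-\mu_2)^2/(2\sigma_1^2)]$, is strictly increasing with $\lim_{y\to0}F(y)=0$ and $\lim_{y\to(\mu_1-\mu_2)^2/(2\sigma_1^2)}F(y)=\infty$.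
   Context: $K\ge2$; $\mathcal{W}=\{w\in\mathbb{R}_+^K:\sum_{a=1}^Kw_a=1\}$ is the probability simplex. *)

(* Defs.v *)
(* Arms are indexed 1..K by nat, as in the paper. *)
From HB Require Import structures.
From mathcomp Require Import all_boot all_order all_algebra.
From mathcomp Require Import all_classical all_reals all_analysis.
Set Implicit Arguments. Unset Strict Implicit. Unset Printing Implicit Defensive.
Import Order.TTheory GRing.Theory Num.Theory.
Import numFieldNormedType.Exports.
Local Open Scope ring_scope.

Section Defs.
Variable R : realType.

Definition in_simplex (K : nat) (w : nat -> R) : Prop :=
  (forall a, (1 <= a <= K)%N -> 0 <= w a) /\ \sum_(1 <= a < K.+1) w a = 1.

(* (mu_1 - mu_a)^2 / (2 (sigma_1^2/w_1 + sigma_a^2/w_a)), extended by its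
   natural value 0 when w_1 = 0 or w_a = 0 (the denominator is +oo there). *)
Definition gterm (mu sig w : nat -> R) (a : nat) : R :=
  if (0 < w 1) && (0 < w a) then
    (mu 1 - mu a) ^+ 2 / (2 * (sig 1 ^+ 2 / w 1 + sig a ^+ 2 / w a))
  else 0.

Definition gobj (K : nat) (mu sig w : nat -> R) : R :=
  \big[Num.min/gterm mu sig w 2]_(2 <= a < K.+1) gterm mu sig w a.

Definition is_argmax (K : nat) (mu sig w : nat -> R) : Prop :=
  in_simplex K w /\ forall w', in_simplex K w' -> gobj K mu sig w' <= gobj K mu sig w.

Definition psi (mu sig : nat -> R) (a : nat) (y : R) : R :=
  ((mu 1 - mu a) ^+ 2 - 2 * y * sig 1 ^+ 2) / (2 * sig a ^+ 2 * y).

Definition Ffun (K : nat) (mu sig : nat -> R) (y : R) : R :=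
  \sum_(2 <= a < K.+1) sig 1 ^+ 2 / (sig a ^+ 2 * psi mu sig a y ^+ 2).

Definition ymax (mu sig : nat -> R) : R := (mu 1 - mu 2) ^+ 2 / (2 * sig 1 ^+ 2).

End Defs.

(* Main.v *)
Require Import Defs.
From HB Require Import structures.
From mathcomp Require Import all_boot all_order all_algebra.
From mathcomp Require Import all_classical all_reals all_analysis.
From mathcomp Require Import lra ring zify.
Import Order.TTheory GRing.Theory Num.Theory.
Import numFieldNormedType.Exports.
Local Open Scope classical_set_scope.
Local Open Scope ring_scope.
Set Implicit Arguments. Unset Strict Implicit.

Lemma mu_le2 (R : realType) (K : nat) (mu : nat -> R)
  (hmuord : forall a, (2 <= a < K)%N -> mu a.+1 <= mu a) :
  forall a, (2 <= a <= K)%N -> mu a <= mu 2.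
Proof.
elim=> [//|a IH] /andP[h1 h2].
have [->//|ha] := eqVneq a.+1 2%N.
have h2a : (2 <= a)%N by move: h1 ha; case: a {IH h2} => [|[|a]].
apply: le_trans (hmuord a _) (IH _); first by rewrite h2a.
by rewrite h2a ltnW.
Qed.

Lemma d_ge (R : realType) (K : nat) (mu : nat -> R)
  (hmu12 : mu 2 < mu 1)
  (hmuord : forall a, (2 <= a < K)%N -> mu a.+1 <= mu a) a :
  (2 <= a <= K)%N -> 0 < (mu 1 - mu 2) ^+ 2 /\ (mu 1 - mu 2) ^+ 2 <= (mu 1 - mu a) ^+ 2.
Proof.
move=> ha; have h := @mu_le2 R K mu hmuord a ha.
split; first by rewrite exprn_gt0 // subr_gt0.
rewrite ler_pXn2r // ?nnegrE; lra.
Qed.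

Lemma Ffun_eq (R : realType) (K : nat) (mu sig : nat -> R) :
  Ffun K mu sig = fun y => \sum_(2 <= a < K.+1)
     (sig 1 ^+ 2 / sig a ^+ 2) * ((2 * sig a ^+ 2 * y) / ((mu 1 - mu a) ^+ 2 - 2 * y * sig 1 ^+ 2)) ^+ 2.
Proof.
apply/funext => y; rewrite /Ffun; apply: eq_bigr => a _.
rewrite /psi invfM -!exprVn invf_div mulrA.
by [].
Qed.

Lemma cvg_sum_seq (R : realType) (F : set_system R) (FF : Filter F) (r : seq nat)
  (f : nat -> R -> R) (l : nat -> R) :
  (forall i, i \in r -> f i x @[x --> F] --> l i) ->
  (\sum_(i <- r) f i x) @[x --> F] --> \sum_(i <- r) l i.
Proof.
elim: r => [|i r IH] h.
  rewrite big_nil; under eq_cvg do rewrite big_nil; exact: cvg_cst.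
rewrite big_cons; under eq_cvg do rewrite big_cons.
apply: cvgD; first by apply: h; rewrite mem_head.
by apply: IH => j hj; apply: h; rewrite in_cons hj orbT.
Qed.

Lemma Ffun_cont (R : realType) (K : nat) (mu sig : nat -> R) (y0 : R) :
  (forall a, (2 <= a <= K)%N -> (mu 1 - mu a) ^+ 2 - 2 * y0 * sig 1 ^+ 2 != 0) ->
  Ffun K mu sig x @[x --> y0] --> Ffun K mu sig y0.
Proof.
move=> hN; rewrite Ffun_eq.
apply: cvg_sum_seq => a; rewrite mem_index_iota => ha.
have ha' : (2 <= a <= K)%N by rewrite -ltnS.
apply: cvgMl_tmp.
under eq_cvg do rewrite expr2.
rewrite expr2.
have hc : (fun x => 2 * sig a ^+ 2 * x / ((mu 1 - mu a) ^+ 2 - 2 * x * sig 1 ^+ 2)) x @[x --> y0] -->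
   2 * sig a ^+ 2 * y0 / ((mu 1 - mu a) ^+ 2 - 2 * y0 * sig 1 ^+ 2).
  apply: cvgM; first by apply: cvgMl_tmp; exact: cvg_id.
  apply: cvgV; first exact: hN.
  apply: cvgB; first exact: cvg_cst.
  apply: cvgMr_tmp; apply: cvgMl_tmp; exact: cvg_id.
exact: (cvgM hc hc).
Qed.

Lemma ymax_pos (R : realType) (mu sig : nat -> R) :
  mu 2 < mu 1 -> 0 < sig 1 -> 0 < ymax mu sig.
Proof.
move=> h1 h2; rewrite /ymax divr_gt0 // ?mulr_gt0 ?exprn_gt0 // subr_gt0 //.
Qed.

Lemma N_pos (R : realType) (K : nat) (mu sig : nat -> R)
  (hmu12 : mu 2 < mu 1)
  (hmuord : forall a, (2 <= a < K)%N -> mu a.+1 <= mu a)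
  (hs1 : 0 < sig 1) a y :
  (2 <= a <= K)%N -> y < ymax mu sig -> 0 < (mu 1 - mu a) ^+ 2 - 2 * y * sig 1 ^+ 2.
Proof.
move=> ha; have [h0 h1] := d_ge hmu12 hmuord ha.
rewrite /ymax ltr_pdivlMr ?mulr_gt0 ?exprn_gt0 // => hy.
rewrite subr_gt0; apply: lt_le_trans h1; rewrite mulrAC mulrC; lra.
Qed.

Lemma psi_pos (R : realType) (K : nat) (mu sig : nat -> R)
  (hmu12 : mu 2 < mu 1)
  (hmuord : forall a, (2 <= a < K)%N -> mu a.+1 <= mu a)
  (hsig : forall a, (1 <= a <= K)%N -> 0 < sig a) a y :
  (2 <= a <= K)%N -> 0 < y -> y < ymax mu sig -> 0 < psi mu sig a y.
Proof.
move=> ha hy0 hy.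
have hs1 : 0 < sig 1 by apply: hsig; lia.
have hsa : 0 < sig a by apply: hsig; lia.
rewrite /psi divr_gt0 //; first exact: (N_pos hmu12 hmuord).
by rewrite !mulr_gt0 ?exprn_gt0.
Qed.

Lemma psi_decr (R : realType) (K : nat) (mu sig : nat -> R)
  (hmu12 : mu 2 < mu 1)
  (hmuord : forall a, (2 <= a < K)%N -> mu a.+1 <= mu a)
  (hsig : forall a, (1 <= a <= K)%N -> 0 < sig a) a x y :
  (2 <= a <= K)%N -> 0 < x -> x < y -> psi mu sig a y < psi mu sig a x :> R.
Proof.
move=> ha hx hxy.
have hsa : 0 < sig a by apply: hsig; lia.
have [hd0 hd] := d_ge hmu12 hmuord ha.
have hd' : 0 < (mu 1 - mu a) ^+ 2 by apply: lt_le_trans hd.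
have hy : 0 < y by apply: lt_trans hxy.
rewrite /psi ltr_pdivrMr ?mulr_gt0 ?exprn_gt0 // [X in _ < X]mulrAC ltr_pdivlMr ?mulr_gt0 ?exprn_gt0 //.
have hyx : 0 < y - x by rewrite subr_gt0.
have : 0 < sig a ^+ 2 * (mu 1 - mu a) ^+ 2 * (y - x).
  by apply: mulr_gt0 => //; apply: mulr_gt0 => //; apply: exprn_gt0.
nra.
Qed.

Lemma Ffun_incr (R : realType) (K : nat) (mu sig : nat -> R)
  (hK : (2 <= K)%N)
  (hmu12 : mu 2 < mu 1)
  (hmuord : forall a, (2 <= a < K)%N -> mu a.+1 <= mu a)
  (hsig : forall a, (1 <= a <= K)%N -> 0 < sig a) (x y : R) :
  0 < x -> x < y -> y < ymax mu sig -> Ffun K mu sig x < Ffun K mu sig y.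
Proof.
move=> hx hxy hy.
apply: ltr_sum_nat; first lia.
move=> a ha; have ha' : (2 <= a <= K)%N by lia.
have hs1 : 0 < sig 1 by apply: hsig; lia.
have hsa : 0 < sig a by apply: hsig; lia.
have hq := psi_pos hmu12 hmuord hsig ha' (lt_trans hx hxy) hy.
have hqp := psi_decr hmu12 hmuord hsig ha' hx hxy.
have hp : 0 < psi mu sig a x by apply: lt_trans hqp.
rewrite (ltr_pM2l (exprn_gt0 2 hs1)) ltf_pV2; last 2 first.
- by rewrite posrE mulr_gt0 ?exprn_gt0.
- by rewrite posrE mulr_gt0 ?exprn_gt0.
rewrite (ltr_pM2l (exprn_gt0 2 hsa)).
nra.
Qed.

Lemma Ffun0 (R : realType) (K : nat) (mu sig : nat -> R) : Ffun K mu sig 0 = 0.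
Proof.
rewrite /Ffun big1 // => a _.
by rewrite /psi !(mulr0, mul0r, invr0, subr0, expr2).
Qed.

Lemma Ffun_lim0 (R : realType) (K : nat) (mu sig : nat -> R)
  (hmu12 : mu 2 < mu 1)
  (hmuord : forall a, (2 <= a < K)%N -> mu a.+1 <= mu a)
  (hs1 : 0 < sig 1) :
  Ffun K mu sig y @[y --> 0^'+] --> 0.
Proof.
rewrite -{2}(Ffun0 K mu sig); apply: cvg_at_right_filter; apply: Ffun_cont => a ha.
by rewrite gt_eqF // (N_pos hmu12 hmuord) // ymax_pos.
Qed.

Lemma Ffun_cont_in (R : realType) (K : nat) (mu sig : nat -> R)
  (hmu12 : mu 2 < mu 1)
  (hmuord : forall a, (2 <= a < K)%N -> mu a.+1 <= mu a)
  (hs1 : 0 < sig 1) y :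
  y < ymax mu sig -> Ffun K mu sig x @[x --> y] --> Ffun K mu sig y.
Proof.
move=> hy; apply: Ffun_cont => a ha.
by rewrite gt_eqF // (N_pos hmu12 hmuord).
Qed.

Lemma Ffun_limy (R : realType) (K : nat) (mu sig : nat -> R)
  (hK : (2 <= K)%N)
  (hmu12 : mu 2 < mu 1)
  (hmuord : forall a, (2 <= a < K)%N -> mu a.+1 <= mu a)
  (hsig : forall a, (1 <= a <= K)%N -> 0 < sig a) :
  Ffun K mu sig y @[y --> (ymax mu sig)^'-] --> +oo.
Proof.
have hs1 : 0 < sig 1 by apply: hsig; lia.
have hs2 : 0 < sig 2 by apply: hsig; lia.
set m := ymax mu sig.
have hm : 0 < m by apply: ymax_pos.
apply/cvgryPge => A.
set h := m / 2.
have hh : 0 < h by rewrite divr_gt0.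
have hhm : h < m by rewrite /h; lra.
set C := sig 2 ^+ 2 * h ^+ 2.
set B := (`|A| + 1) * sig 1 ^+ 2.
have hC : 0 < C by rewrite mulr_gt0 ?exprn_gt0.
have hB : 0 < B by rewrite mulr_gt0 ?exprn_gt0 // ltr_wpDl.
near=> y.
have hyl : y < m by near: y; exact: nbhs_left_lt.
have hyh : h < y by near: y; apply: nbhs_left_gt.
have ht1 : m - y < 1 by near: y; apply: nbhs_left_ltBl.
have ht2 : m - y < C / B by near: y; apply: nbhs_left_ltBl; rewrite divr_gt0.
have hy0 : 0 < y by apply: lt_trans hyh.
have hlow : sig 1 ^+ 2 / (sig 2 ^+ 2 * psi mu sig 2 y ^+ 2) <= Ffun K mu sig y.
  rewrite /Ffun big_ltn; last by lia.
  rewrite lerDl; apply: sumr_ge0 => a _.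
  apply: divr_ge0; [exact: sqr_ge0 | apply: mulr_ge0; exact: sqr_ge0].
have hN : 0 < (mu 1 - mu 2) ^+ 2 - 2 * y * sig 1 ^+ 2.
  by apply: (N_pos hmu12 hmuord) => //; lia.
have ht : 0 < m - y by rewrite subr_gt0.
have eterm : sig 1 ^+ 2 / (sig 2 ^+ 2 * psi mu sig 2 y ^+ 2) =
   sig 2 ^+ 2 * y ^+ 2 / (sig 1 ^+ 2 * (m - y) ^+ 2).
  move: ht; rewrite /psi /m /ymax => ht.
  field.
  by apply/and4P; split; rewrite gt_eqF //; nra.
apply: le_trans hlow; rewrite eterm ler_pdivlMr; last by rewrite mulr_gt0 ?exprn_gt0.
set t := m - y in ht ht1 ht2 *.
have htB : t * B < C by rewrite -ltr_pdivlMr.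
have h1 : A * (sig 1 ^+ 2 * t ^+ 2) <= B * t ^+ 2.
  rewrite /B -mulrA ler_pM2r ?mulr_gt0 ?exprn_gt0 //.
  by apply: le_trans (ler_norm A) _; lra.
have h2 : B * t ^+ 2 <= B * t by rewrite ler_pM2l // expr2 ger_pMl //; lra.
have h3 : C <= sig 2 ^+ 2 * y ^+ 2.
  rewrite /C ler_pM2l ?exprn_gt0 //; rewrite ler_pXn2r ?nnegrE //; lra.
lra.
Unshelve. all: by end_near.
Qed.

Lemma Ffun_root (R : realType) (K : nat) (mu sig : nat -> R)
  (hK : (2 <= K)%N)
  (hmu12 : mu 2 < mu 1)
  (hmuord : forall a, (2 <= a < K)%N -> mu a.+1 <= mu a)
  (hsig : forall a, (1 <= a <= K)%N -> 0 < sig a) :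
  exists ys, (0 < ys < ymax mu sig) /\ Ffun K mu sig ys = 1 /\
     forall y, 0 < y < ymax mu sig -> Ffun K mu sig y = 1 -> y = ys.
Proof.
have hs1 : 0 < sig 1 by apply: hsig; lia.
set m := ymax mu sig.
have hm : 0 < m by apply: ymax_pos.
have l0 := Ffun_lim0 hmu12 hmuord hs1.
have ly := Ffun_limy hK hmu12 hmuord hsig.
have h0 : \forall y \near (0:R)^'+, [/\ 0 < y, y < m & Ffun K mu sig y < 1].
  near=> y; split.
  - by near: y; exact: nbhs_right_gt.
  - by near: y; exact: nbhs_right_lt.
  - by near: y; apply: (@cvgr_lt R _ _ _ _ _ l0); exact: ltr01.
have [x0 [hx0 hx0m hFx0]] := filter_ex h0.
move/cvgryPge: ly => ly.
have h1 : \forall y \near m^'-, [/\ x0 < y, y < m & 2 <= Ffun K mu sig y].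
  near=> y; split.
  - by near: y; exact: nbhs_left_gt.
  - by near: y; exact: nbhs_left_lt.
  - by near: y; exact: ly.
have [x1 [hx1 hx1m hFx1]] := filter_ex h1.
have [c hc Fc] : exists2 c, c \in `[x0, x1] & Ffun K mu sig c = 1.
  apply: IVT; first exact: ltW.
    apply: continuous_in_subspaceT => y; rewrite inE /= in_itv /= => /andP[_ hy].
    by apply: Ffun_cont_in => //; apply: le_lt_trans hx1m.
  rewrite ge_min le_max; apply/andP; split; apply/orP; [left|right]; lra.
move: hc; rewrite in_itv /= => /andP[hc0 hc1].
have hc0' : 0 < c by apply: lt_le_trans hc0.
have hc1' : c < m by apply: le_lt_trans hx1m.
exists c; split; first by rewrite hc0' hc1'.
split => // y /andP[hy0 hym] Fy.
apply/eqP; rewrite eq_le; apply/andP; split; rewrite leNgt; apply/negP => hlt.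
- by have := Ffun_incr hK hmu12 hmuord hsig hc0' hlt hym; lra.
- by have := Ffun_incr hK hmu12 hmuord hsig hy0 hlt hc1'; lra.
Unshelve. all: by end_near.
Qed.

Definition Sst (R : realType) (K : nat) (mu sig : nat -> R) (ys : R) : R :=
  1 + \sum_(2 <= i < K.+1) (psi mu sig i ys)^-1.

Lemma Sst_pos (R : realType) (K : nat) (mu sig : nat -> R) ys :
  (forall a, (2 <= a <= K)%N -> 0 < psi mu sig a ys) -> 0 < Sst K mu sig ys.
Proof.
move=> hp; rewrite /Sst.
have : 0 <= \sum_(2 <= i < K.+1) (psi mu sig i ys)^-1.
  rewrite big_nat; apply: sumr_ge0 => i hi; rewrite invr_ge0 ltW //; apply: hp; lia.
lra.
Qed.

Lemma gterm_star (R : realType) (K : nat) (mu sig : nat -> R)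
  (hmu12 : mu 2 < mu 1)
  (hmuord : forall a, (2 <= a < K)%N -> mu a.+1 <= mu a)
  (hsig : forall a, (1 <= a <= K)%N -> 0 < sig a) (ys : R) (w : nat -> R) :
  0 < ys -> (forall a, (2 <= a <= K)%N -> 0 < psi mu sig a ys) ->
  w 1 = 1 / Sst K mu sig ys ->
  (forall a, (2 <= a <= K)%N -> w a = (psi mu sig a ys)^-1 / Sst K mu sig ys) ->
  forall a, (2 <= a <= K)%N -> gterm mu sig w a = ys / Sst K mu sig ys.
Proof.
move=> hys hp hw1 hwa a ha.
have hS := Sst_pos hp.
have hs1 : 0 < sig 1 by apply: hsig; lia.
have hsa : 0 < sig a by apply: hsig; lia.
have hpa := hp a ha.
have [_ hd] := d_ge hmu12 hmuord ha.
have hd0 : 0 < (mu 1 - mu a) ^+ 2.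
  by apply: lt_le_trans hd; case: (d_ge hmu12 hmuord ha).
rewrite /gterm hw1 hwa // ifT; last by rewrite !divr_gt0 ?invr_gt0.
move: hpa; set S := Sst K mu sig ys; rewrite /psi => hpa.
have hN : 0 < (mu 1 - mu a) ^+ 2 - 2 * ys * sig 1 ^+ 2.
  by move: hpa; rewrite pmulr_lgt0 // invr_gt0 !mulr_gt0 ?exprn_gt0.
have hSd : 0 < S * (mu 1 - mu a) ^+ 2 by rewrite mulr_gt0.
field.
apply/and5P; split; rewrite gt_eqF //; nra.
Qed.

Lemma gobj_star (R : realType) (K : nat) (mu sig : nat -> R)
  (hK : (2 <= K)%N)
  (hmu12 : mu 2 < mu 1)
  (hmuord : forall a, (2 <= a < K)%N -> mu a.+1 <= mu a)
  (hsig : forall a, (1 <= a <= K)%N -> 0 < sig a) (ys : R) (w : nat -> R) :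
  0 < ys -> (forall a, (2 <= a <= K)%N -> 0 < psi mu sig a ys) ->
  w 1 = 1 / Sst K mu sig ys ->
  (forall a, (2 <= a <= K)%N -> w a = (psi mu sig a ys)^-1 / Sst K mu sig ys) ->
  gobj K mu sig w = ys / Sst K mu sig ys.
Proof.
move=> hys hp hw1 hwa.
have hg := gterm_star hmu12 hmuord hsig hys hp hw1 hwa.
rewrite /gobj big_seq; apply: (big_ind (fun v => v = ys / Sst K mu sig ys)).
- by apply: hg; lia.
- by move=> x y -> ->; rewrite minxx.
- by move=> i; rewrite mem_index_iota => hi; apply: hg; lia.
Qed.

Lemma bigmin_le_seq (R : realType) (x : R) (r : seq nat) (F : nat -> R) j :
  j \in r -> \big[Num.min/x]_(i <- r) F i <= F j.
Proof.
elim: r => [//|i r IH]; rewrite in_cons big_cons => /orP[/eqP->|hj].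
  by rewrite ge_min lexx.
by rewrite ge_min (IH hj) orbT.
Qed.

Lemma sum_eq0_seq (R : realType) (r : seq nat) (f : nat -> R) :
  (forall i, i \in r -> 0 <= f i) -> \sum_(i <- r) f i = 0 ->
  forall j, j \in r -> f j = 0.
Proof.
elim: r => [//|i r IH] hf; rewrite big_cons => /eqP.
have hi : 0 <= f i by apply: hf; rewrite mem_head.
have hr : 0 <= \sum_(k <- r) f k.
  by rewrite big_seq; apply: sumr_ge0 => k hk; apply: hf; rewrite in_cons hk orbT.
rewrite paddr_eq0 // => /andP[/eqP h1 /eqP h2] j; rewrite in_cons => /orP[/eqP->//|hj].
by apply: IH => // k hk; apply: hf; rewrite in_cons hk orbT.
Qed.

Lemma tang (R : realType) (b x c E : R) :
  0 < b -> 0 < x -> 0 < c -> b / x <= b * c + E -> c^-1 - x <= E / (b * c ^+ 2).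
Proof.
move=> hb hx hc h.
have hix : x * x^-1 = 1 by rewrite divff // gt_eqF.
have e : b * x^-1 - (2 * b * c - b * c ^+ 2 * x) = b * x^-1 * (c * x - 1) ^+ 2.
  by field; rewrite gt_eqF.
have : 0 <= b * x^-1 * (c * x - 1) ^+ 2.
  by apply: mulr_ge0; [apply: mulr_ge0; [exact: ltW | rewrite invr_ge0; exact: ltW] | exact: sqr_ge0].
rewrite -e => h2.
have e2 : c^-1 - x = (b * c - b * c ^+ 2 * x) / (b * c ^+ 2).
  by field; rewrite !gt_eqF.
rewrite e2 ler_pM2r ?invr_gt0 ?mulr_gt0 ?exprn_gt0 //.
nra.
Qed.

Lemma simplex_star (R : realType) (K : nat) (mu sig : nat -> R)
  (hK : (2 <= K)%N) (ys : R) (w : nat -> R) :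
  (forall a, (2 <= a <= K)%N -> 0 < psi mu sig a ys) ->
  w 1 = 1 / Sst K mu sig ys ->
  (forall a, (2 <= a <= K)%N -> w a = (psi mu sig a ys)^-1 / Sst K mu sig ys) ->
  in_simplex K w.
Proof.
move=> hp hw1 hwa; have hS := Sst_pos hp; split.
  move=> a ha; have [->|ne] := eqVneq a 1%N; first by rewrite hw1 divr_ge0 // ltW.
  rewrite hwa; last lia.
  by rewrite divr_ge0 // ltW // invr_gt0 hp //; lia.
rewrite big_ltn; last lia.
rewrite hw1 (@eq_big_nat _ _ _ 2 K.+1 _ (fun i => (psi mu sig i ys)^-1 / Sst K mu sig ys)); last first.
  by move=> i hi; apply: hwa; lia.
rewrite -mulr_suml.
move: hS; rewrite /Sst => hS.
by field; rewrite gt_eqF.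
Qed.

Lemma L3 (R : realType) (K : nat) (mu sig : nat -> R)
  (hK : (2 <= K)%N)
  (hsig : forall a, (1 <= a <= K)%N -> 0 < sig a) (ys : R) (w : nat -> R) :
  0 < ys -> (forall a, (2 <= a <= K)%N -> 0 < psi mu sig a ys) ->
  Ffun K mu sig ys = 1 ->
  in_simplex K w ->
  (forall a, (2 <= a <= K)%N -> ys / Sst K mu sig ys <= gterm mu sig w a) ->
  w 1 = 1 / Sst K mu sig ys /\
  (forall a, (2 <= a <= K)%N -> w a = (psi mu sig a ys)^-1 / Sst K mu sig ys).
Proof.
move=> hys hp hF [hw0 hwsum] hg.
have hS := Sst_pos hp.
set S := Sst K mu sig ys in hS hg *.
have hs1 : 0 < sig 1 by apply: hsig; lia.
have hc : 0 < ys / S by rewrite divr_gt0.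
have hpos : forall a, (2 <= a <= K)%N -> 0 < w 1 /\ 0 < w a.
  move=> a ha; have := hg a ha; rewrite /gterm.
  by case: ifP => [/andP[h1 h2] _ //| _ h]; lra.
have hu : 0 < w 1 by case: (hpos 2%N); first lia.
have key : forall a, (2 <= a <= K)%N ->
    sig 1 ^+ 2 / w 1 + sig a ^+ 2 / w a <= sig 1 ^+ 2 * S + sig a ^+ 2 * psi mu sig a ys * S.
  move=> a ha; have [h1 h2] := hpos a ha.
  have hsa : 0 < sig a by apply: hsig; lia.
  have := hg a ha; rewrite /gterm h1 h2 /=.
  set X := sig 1 ^+ 2 / w 1 + sig a ^+ 2 / w a.
  have hX : 0 < X by rewrite addr_gt0 // divr_gt0 // exprn_gt0.
  have ed : (mu 1 - mu a) ^+ 2 =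
     ys / S * (2 * (sig 1 ^+ 2 * S + sig a ^+ 2 * psi mu sig a ys * S)).
    by rewrite /psi; field; rewrite !gt_eqF.
  rewrite ler_pdivlMr ?mulr_gt0 // ed (ler_pM2l hc) (ler_pM2l (ltr0Sn _ 1)).
  done.
set u := w 1 in hu key hpos *.
set E := sig 1 ^+ 2 * (S - 1 / u).
have tg : forall a, (2 <= a <= K)%N ->
    (psi mu sig a ys)^-1 / S - w a <= E / S ^+ 2 * ((psi mu sig a ys)^-1 ^+ 2 / sig a ^+ 2).
  move=> a ha; have [_ h2] := hpos a ha.
  have hsa : 0 < sig a by apply: hsig; lia.
  have hpa := hp a ha.
  have hk := key a ha.
  have := @tang R (sig a ^+ 2) (w a) (psi mu sig a ys * S) E (exprn_gt0 2 hsa) h2 (mulr_gt0 hpa hS).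
  have e1 : (psi mu sig a ys * S)^-1 = (psi mu sig a ys)^-1 / S by rewrite invfM.
  have e2 : E / (sig a ^+ 2 * (psi mu sig a ys * S) ^+ 2) =
      E / S ^+ 2 * ((psi mu sig a ys)^-1 ^+ 2 / sig a ^+ 2).
    by field; rewrite !gt_eqF.
  rewrite e1 e2; apply.
  rewrite /E div1r; nra.
have hsumw : \sum_(2 <= i < K.+1) w i = 1 - u.
  by move: hwsum; rewrite big_ltn; [rewrite /u; lra | lia].
have hsump : \sum_(2 <= i < K.+1) (psi mu sig i ys)^-1 = S - 1 by rewrite /S /Sst; lra.
have hsumq : \sum_(2 <= i < K.+1) ((psi mu sig i ys)^-1 ^+ 2 / sig i ^+ 2) = 1 / sig 1 ^+ 2.
  move: hF; rewrite /Ffun (@eq_big_nat _ _ _ 2 K.+1 _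
     (fun i => sig 1 ^+ 2 * ((psi mu sig i ys)^-1 ^+ 2 / sig i ^+ 2))); last first.
    move=> i hi; have hsi : 0 < sig i by apply: hsig; lia.
    have hpi : 0 < psi mu sig i ys by apply: hp; lia.
    by field; rewrite !gt_eqF.
  rewrite -mulr_sumr => h.
  have hn : sig 1 ^+ 2 != 0 by rewrite gt_eqF // exprn_gt0.
  apply: (mulfI hn); rewrite h.
  by field; rewrite gt_eqF.
have hsum : \sum_(2 <= i < K.+1) ((psi mu sig i ys)^-1 / S - w i) <=
    \sum_(2 <= i < K.+1) (E / S ^+ 2 * ((psi mu sig i ys)^-1 ^+ 2 / sig i ^+ 2)).
  by apply: ler_sum_nat => i hi; apply: tg; lia.
rewrite sumrB -mulr_suml -mulr_sumr hsump hsumw hsumq in hsum.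
set iu := u^-1.
have hiu : u * iu = 1 by rewrite /iu divff // gt_eqF.
have e3 : (S - 1) / S - (1 - u) - E / S ^+ 2 * (1 / sig 1 ^+ 2) = (S ^+ 2 * u - 2 * S + iu) / S ^+ 2.
  by rewrite /E /iu; field; rewrite !gt_eqF.
have h4 : (S ^+ 2 * u - 2 * S + iu) / S ^+ 2 <= 0 by rewrite -e3; lra.
move: h4; rewrite ler_pdivrMr ?exprn_gt0 // mul0r => h4.
have h5 : (S * u - 1) ^+ 2 <= 0 by nra.
have h6 : S * u = 1.
  have : (S * u - 1) ^+ 2 == 0 by rewrite eq_le h5 sqr_ge0.
  by rewrite sqrf_eq0 subr_eq0 => /eqP.
have hu1 : u = 1 / S by rewrite -h6; field; rewrite gt_eqF.
split; first exact: hu1.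
have hE : E = 0 by rewrite /E hu1; field; rewrite gt_eqF.
have hge : forall a, (2 <= a <= K)%N -> 0 <= w a - (psi mu sig a ys)^-1 / S.
  move=> a ha; have [_ h2] := hpos a ha.
  have hsa : 0 < sig a by apply: hsig; lia.
  have hpa := hp a ha.
  have hk := key a ha.
  have : sig a ^+ 2 / w a <= sig a ^+ 2 * (psi mu sig a ys * S).
    move: hk hE; rewrite /E div1r => hk hE; nra.
  rewrite (ler_pM2l (exprn_gt0 2 hsa)) => h.
  have hpS : 0 < psi mu sig a ys * S := mulr_gt0 hpa hS.
  by rewrite subr_ge0 -invfM -lef_pV2 ?invrK // posrE ?invr_gt0.
have hz : \sum_(2 <= i < K.+1) (w i - (psi mu sig i ys)^-1 / S) = 0.
  by rewrite sumrB -mulr_suml hsump hsumw hu1; field; rewrite gt_eqF.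
move=> a ha.
apply/eqP; rewrite -subr_eq0; apply/eqP; apply: (sum_eq0_seq _ hz).
  by move=> i; rewrite mem_index_iota => hi; apply: hge; lia.
by rewrite mem_index_iota; lia.
Qed.

Unset Implicit Arguments.

Theorem lemma3 (R : realType) (K : nat) (mu sig : nat -> R)
  (hK : (2 <= K)%N)
  (hmu12 : mu 2 < mu 1)
  (hmuord : forall a, (2 <= a < K)%N -> mu a.+1 <= mu a)
  (hsig : forall a, (1 <= a <= K)%N -> 0 < sig a) :
  (* F is strictly increasing on its domain (0, ymax) *)
  (forall x y, 0 < x -> x < y -> y < ymax mu sig ->
     Ffun K mu sig x < Ffun K mu sig y) /\
  (* lim_{y -> 0+} F y = 0 *)
  (Ffun K mu sig y @[y --> 0^'+] --> 0) /\
  (* lim_{y -> ymax-} F y = +oo *)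
  (Ffun K mu sig y @[y --> (ymax mu sig)^'-] --> +oo) /\
  (* F y = 1 has exactly one solution in the domain *)
  (exists ys, (0 < ys < ymax mu sig) /\ Ffun K mu sig ys = 1 /\
     forall y, 0 < y < ymax mu sig -> Ffun K mu sig y = 1 -> y = ys) /\
  (* w is a maximizer iff it is given by the closed-form expressions at y* *)
  (forall ys, 0 < ys < ymax mu sig -> Ffun K mu sig ys = 1 ->
   forall w : nat -> R,
     is_argmax K mu sig w <->
     (w 1 = 1 / (1 + \sum_(2 <= i < K.+1) (psi mu sig i ys)^-1) /\
      forall a, (2 <= a <= K)%N ->
        w a = (psi mu sig a ys)^-1 / (1 + \sum_(2 <= i < K.+1) (psi mu sig i ys)^-1))).
Proof.
have hs1 : 0 < sig 1 by apply: hsig; lia.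
split; first by move=> x y hx hxy hy; apply: Ffun_incr.
split; first exact: Ffun_lim0.
split; first exact: Ffun_limy.
split; first exact: Ffun_root.
move=> ys /andP[hys0 hysm] hF w.
have hp : forall a, (2 <= a <= K)%N -> 0 < psi mu sig a ys.
  by move=> a ha; apply: (psi_pos hmu12 hmuord hsig ha hys0 hysm).
rewrite -/(Sst K mu sig ys).
split.
- case=> hsimp hmax.
  pose ws := fun i => if i == 1%N then 1 / Sst K mu sig ys
                      else (psi mu sig i ys)^-1 / Sst K mu sig ys.
  have hws1 : ws 1%N = 1 / Sst K mu sig ys by rewrite /ws eqxx.
  have hwsa : forall a, (2 <= a <= K)%N -> ws a = (psi mu sig a ys)^-1 / Sst K mu sig ys.
    by move=> a ha; rewrite /ws ifF //; apply/eqP; lia.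
  have := hmax ws (simplex_star hK hp hws1 hwsa).
  rewrite (gobj_star hK hmu12 hmuord hsig hys0 hp hws1 hwsa) => hle.
  apply: (L3 hK hsig hys0 hp hF hsimp) => a ha.
  apply: le_trans hle _; rewrite /gobj; apply: bigmin_le_seq; rewrite mem_index_iota; lia.
- case=> hw1 hwa; split; first exact: (simplex_star hK hp hw1 hwa).
  move=> w' hw'; rewrite (gobj_star hK hmu12 hmuord hsig hys0 hp hw1 hwa).
  rewrite leNgt; apply/negP => hlt.
  have hge : forall a, (2 <= a <= K)%N -> ys / Sst K mu sig ys <= gterm mu sig w' a.
    move=> a ha; apply/ltW/(lt_le_trans hlt); rewrite /gobj.
    by apply: bigmin_le_seq; rewrite mem_index_iota; lia.
  have [h1 h2] := L3 hK hsig hys0 hp hF hw' hge.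
  by move: hlt; rewrite (gobj_star hK hmu12 hmuord hsig hys0 hp h1 h2) ltxx.
Qed.
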